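(* Fix $\lambda\in[0,1)$, $N\ge1$ and $p\in(0,1]$. Let $(\mathbf{V}^{N,p}[n])_{n\ge0}$ and $(\mathbf{V}^{N,0}[n])_{n\ge0}$ be the embedded discrete-time chains of the $N$-station systems with centralization parameters $p$ and $0$, respectively. If $\mathbf{V}^{N,p}[0]=\mathbf{V}^{N,0}[0]$, then $(\mathbf{V}^{N,p}_1[n])_{n\ge0}$ is stochastically dominated by $(\mathbf{V}^{N,0}_1[n])_{n\ge0}$.
   Context: The $N$-station system with parameter $q\in[0,1]$: station $n\in\{1,\dots,N\}$ has queue length $Q_n(t)\in\mathbb{Z}_+$. Tasks arrive to each station according to independent Poisson processes of rate $\lambda$. Each station has an independent Poisson clock of rate $1-q$: at a tick, if $Q_n>0$ one task leaves station $n$, otherwise nothing happens. An independent central Poisson clock of rate $Nq$: at a tick, if $\sum_nQ_n>0$ one task leaves a station chosen uniformly at random among stations with a longest queue, otherwise nothing happens. $\mathbf{V}^{N,q}_i(t)=\sum_{j\ge i}\frac1N\sum_n\mathbb{I}\{Q_n(t)\ge j\}$. The events (arrivals and ticks of all clocks, including ticks that remove no task) form a Poisson process of total rate $N(1+\lambda)$; with $t_0=0$ and $t_n$ the time of the $n$-th event, $\mathbf{V}^{N,q}[n]=\mathbf{V}^{N,q}(t_n)$. A discrete-time process $(X[n])_{n\ge0}$ is stochastically dominated by $(Y[n])_{n\ge0}$ if there exist processes $X',Y'$ on a common probability space with the same distributions as $X,Y$ respectively and $X'[n]\le Y'[n]$ for all $n\ge0$ almost surely. *)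

(* Defs.v *)
From HB Require Import structures.
From mathcomp Require Import all_boot all_order all_algebra.
From mathcomp Require Import all_classical all_reals all_analysis.
Set Implicit Arguments. Unset Strict Implicit. Unset Printing Implicit Defensive.
Import Order.TTheory GRing.Theory Num.Theory.
Local Open Scope ring_scope.
Local Open Scope classical_set_scope.

(* A configuration of the N-station system: queue lengths Q_n, n : 'I_N. *)
Definition config (N : nat) := {ffun 'I_N -> nat}.

Section System.
Variables (R : realType) (N : nat) (lam q : R).

Definition arr (n : 'I_N) (Q : config N) : config N :=
  [ffun m => if m == n then (Q m).+1 else Q m].
(* one task leaves station n if Q_n > 0, otherwise nothing happens
   (truncated subtraction) *)
Definition dep (n : 'I_N) (Q : config N) : config N :=
  [ffun m => if m == n then (Q m).-1 else Q m].

Definition maxQ (Q : config N) : nat := \max_(m : 'I_N) Q m.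
Definition longest (Q : config N) : {set 'I_N} := [set m | Q m == maxQ Q].

(* Transition probabilities of the embedded discrete-time chain: each event
   of the Poisson process of total rate N(1+lam) is
   - an arrival at station n          w.p. lam / (N(1+lam)),
   - a tick of the clock of station n w.p. (1-q) / (N(1+lam)),
   - a tick of the central clock      w.p. Nq / (N(1+lam)); then a task leaves
     a station chosen uniformly among the longest queues if sum Q > 0,
     otherwise nothing happens. *)
Definition central (Q Q' : config N) : R :=
  if \sum_(m : 'I_N) Q m == 0%N then (Q' == Q)%:R
  else \sum_(m in longest Q) (Q' == dep m Q)%:R / #|longest Q|%:R.

Definition trans (Q Q' : config N) : R :=
  \sum_(m : 'I_N) (lam / (N%:R * (1 + lam))) * (Q' == arr m Q)%:R
  + \sum_(m : 'I_N) ((1 - q) / (N%:R * (1 + lam))) * (Q' == dep m Q)%:R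
  + (N%:R * q / (N%:R * (1 + lam))) * central Q Q'.

Fixpoint path_prob (x : config N) (t : seq (config N)) : R :=
  if t is y :: t' then trans x y * path_prob y t' else 1.

(* probability that the embedded chain started at Q0 follows the
   finite path s = [:: Q[0]; ...; Q[k]] *)
Definition chain_prob (Q0 : config N) (s : seq (config N)) : R :=
  if s is x :: t then (x == Q0)%:R * path_prob x t else 0.

(* V_i(Q) = sum_{j >= i} (1/N) sum_n I{Q_n >= j}  (for i >= 1; the sum over j
   is finite: only j <= Q_n contribute) *)
Definition V (i : nat) (Q : config N) : R :=
  \sum_(m : 'I_N) \sum_(i <= j < (Q m).+1) N%:R^-1.

(* finite-dimensional distributions of (V_1[n])_n for the chain from Q0:
   P(V_1[0] = v_0, ..., V_1[k] = v_k) *)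
Definition V1_fdd (Q0 : config N) (v : seq R) : \bar R :=
  \esum_(s in [set s : seq (config N) | map (V 1) s = v]) (chain_prob Q0 s)%:E.
End System.

(* For processes with values in a countable set (as here) this determines
   the law of the process. *)
Definition has_fdd (R : realType) (d : measure_display) (Omega : measurableType d)
  (P : probability Omega R) (X : Omega -> nat -> R) (mu : seq R -> \bar R) :=
  (forall n, measurable_fun setT (fun w => X w n)) /\
  forall v : seq R, v != [::] ->
    P [set w : Omega | [seq X w k | k <- iota 0 (size v)] = v] = mu v.

Definition stoch_dominated (R : realType) (muX muY : seq R -> \bar R) : Prop :=
  exists (d : measure_display) (Omega : measurableType d)
         (P : probability Omega R) (X Y : Omega -> nat -> R),
    has_fdd P X muX /\ has_fdd P Y muY /\
    P [set w : Omega | forall n, X w n <= Y w n] = 1%E.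

(* Main.v *)
Require Import Defs.
From HB Require Import structures.
From mathcomp Require Import all_boot all_order all_algebra.
From mathcomp Require Import zify fingroup perm ring lra.
From mathcomp Require Import all_classical all_reals all_analysis.

Module SComb.
Set Implicit Arguments. Unset Strict Implicit. Unset Printing Implicit Defensive.
Import Order.TTheory GRing.Theory Num.Theory.

Section Comb.
Variable N : nat.
Local Notation C := (config N).

Definition Sc (Q : C) (c : nat) : nat := (\sum_(m < N) (Q m - c))%N.
Definition cnt (Q : C) (c : nat) : nat := (\sum_(m < N) (c < Q m))%N.

Lemma ScS Q c : Sc Q c = (Sc Q c.+1 + cnt Q c)%N.
Proof.
rewrite /Sc /cnt -big_split /=; apply: eq_bigr => m _.
case: ltnP => h /=; lia.
Qed.

Lemma Sc_arr n Q c : Sc (arr n Q) c = (Sc Q c + (c <= Q n))%N.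
Proof.
rewrite /Sc (bigD1 n) //= [in RHS](bigD1 n) //= ffunE eqxx.
rewrite (eq_bigr (fun m => Q m - c)%N); last first.
  by move=> m /negbTE hm; rewrite ffunE hm.
set s := (\sum_(i < N | i != n) (Q i - c))%N.
case: leqP => h; lia.
Qed.

Lemma Sc_dep n Q c : Sc (dep n Q) c = (Sc Q c - (c < Q n))%N.
Proof.
rewrite /Sc (bigD1 n) //= [in RHS](bigD1 n) //= ffunE eqxx.
rewrite (eq_bigr (fun m => Q m - c)%N); last first.
  by move=> m /negbTE hm; rewrite ffunE hm.
set s := (\sum_(i < N | i != n) (Q i - c))%N.
case: ltnP => h; lia.
Qed.

Definition InvQ (x : C * C) : Prop := forall c, (Sc x.1 c <= Sc x.2 c)%N.

Definition comon (a b : C) (s : {perm 'I_N}) : bool :=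
  [forall n, forall n', (a n < a n')%N ==> (b (s n) <= b (s n'))%N].

Lemma comonP a b s : comon a b s ->
  forall n n', (a n < a n')%N -> (b (s n) <= b (s n'))%N.
Proof. by move=> /forallP h n n'; move: (h n) => /forallP /(_ n') /implyP. Qed.

Definition ltQ (Q : C) (i j : 'I_N) : bool :=
  (Q j < Q i)%N || ((Q i == Q j) && (i < j)%N).

Lemma ltQ_irr Q i : ltQ Q i i = false.
Proof. by rewrite /ltQ ltnn eqxx ltnn. Qed.

Lemma ltQ_trans Q i j k : ltQ Q i j -> ltQ Q j k -> ltQ Q i k.
Proof.
rewrite /ltQ => /orP[h1|/andP[/eqP h1 h1']] /orP[h2|/andP[/eqP h2 h2']].
- by rewrite (ltn_trans h2 h1).
- by rewrite -h2 h1.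
- by rewrite h1 h2.
- by rewrite h1 h2 eqxx (ltn_trans h1' h2') orbT.
Qed.

Lemma ltQ_total Q i j : i != j -> ltQ Q i j || ltQ Q j i.
Proof.
move=> hij; rewrite /ltQ; case: (ltngtP (Q i) (Q j)) => h //=.
case: (ltngtP i j) => // e.
by move: hij; rewrite (val_inj e) eqxx.
Qed.

Definition rset (Q : C) (j : 'I_N) := [set i | ltQ Q i j].

Lemma rset_lt Q j : (#|rset Q j| < N)%N.
Proof.
rewrite -[X in (_ < X)%N](card_ord N); apply: proper_card; apply/properP; split.
  exact: subset_predT.
by exists j => //; rewrite inE ltQ_irr.
Qed.

Definition rk (Q : C) (j : 'I_N) : 'I_N := Ordinal (rset_lt Q j).

Lemma rk_lt Q i j : ltQ Q i j -> (rk Q i < rk Q j)%N.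
Proof.
move=> hij; rewrite /rk /=; apply: proper_card; apply/properP; split.
  by apply/fintype.subsetP => k; rewrite !inE => h; exact: ltQ_trans h hij.
by exists i; rewrite !inE // ltQ_irr.
Qed.

Lemma rk_inj Q : injective (rk Q).
Proof.
move=> i j e; apply/eqP; apply: contraT => hij.
case/orP: (ltQ_total Q hij) => /(rk_lt (Q:=Q)); by rewrite e ltnn.
Qed.

Lemma rk_mono Q i j : (rk Q i < rk Q j)%N -> (Q j <= Q i)%N.
Proof.
move=> h; rewrite leqNgt; apply/negP => hl.
have : ltQ Q j i by rewrite /ltQ hl.
by move/(rk_lt (Q:=Q)); rewrite ltnNge (ltnW h).
Qed.

Lemma comon_exists a b : exists s, comon a b s.
Proof.
exists (perm (@rk_inj a) * (perm (@rk_inj b))^-1)%g.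
apply/forallP => n; apply/forallP => n'; apply/implyP => h.
have h1 : ltQ a n' n by rewrite /ltQ h.
move: (rk_lt h1) => h2.
apply: (rk_mono (Q:=b)).
have e k : rk b ((perm (@rk_inj a) * (perm (@rk_inj b))^-1)%g k) = rk a k.
  by rewrite permM -[rk b _](permE (@rk_inj b)) permKV permE.
by rewrite !e.
Qed.

Definition sig (a b : C) : {perm 'I_N} := odflt 1%g [pick s | comon a b s].

Lemma sigP a b : comon a b (sig a b).
Proof.
rewrite /sig; case: pickP => [s -> //|h].
by case: (comon_exists a b) => s hs; move: (h s); rewrite hs.
Qed.


Lemma ltn_sum_pt (f g : 'I_N -> nat) n :
  (forall m, f m <= g m)%N -> (f n < g n)%N -> (\sum_m f m < \sum_m g m)%N.
Proof.
move=> hfg hn; rewrite (bigD1 n) //= [X in (_ < X)%N](bigD1 n) //=.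
rewrite -addSn leq_add //; apply: leq_sum => m _; exact: hfg.
Qed.

Lemma Sc_ge (Q : C) n c : (Q n - c <= Sc Q c)%N.
Proof. by rewrite /Sc (bigD1 n) //= leq_addr. Qed.

Lemma cnt_perm (Q : C) (s : {perm 'I_N}) c : cnt Q c = (\sum_m (c < Q (s m)))%N.
Proof. by rewrite /cnt (reindex_inj (@perm_inj _ s)). Qed.

Lemma inv_arr (a b : C) s n : comon a b s -> InvQ (a, b) -> InvQ (arr n a, arr (s n) b).
Proof.
move=> hs hI c /=; rewrite !Sc_arr; have := hI c => /= h.
case E1: (c <= a n)%N; case E2: (c <= b (s n))%N => /=; try lia.
case: c E1 E2 h => [|c] E1 E2 h; first by rewrite leq0n in E2.
have h' := hI c; rewrite /= (ScS a c) (ScS b c) in h'.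
suff : (cnt b c < cnt a c)%N by lia.
rewrite (cnt_perm b s); apply: (@ltn_sum_pt _ _ n); last first.
  by rewrite E1 E2.
move=> m; case: (ltnP c (b (s m))) => // hm.
have : (a n <= a m)%N.
  rewrite leqNgt; apply/negP => /(comonP hs) hb.
  move: E2; rewrite ltnNge => /negbFE; lia.
move: E1; lia.
Qed.

Lemma inv_dep (a b : C) s n : comon a b s -> InvQ (a, b) -> InvQ (dep n a, dep (s n) b).
Proof.
move=> hs hI c /=; rewrite !Sc_dep; have := hI c => /= h.
case E1: (c < a n)%N; case E2: (c < b (s n))%N => /=; try lia.
have /= h' := hI c.+1.
suff : (cnt a c < cnt b c)%N by rewrite (ScS a c) (ScS b c); lia.
rewrite (cnt_perm b s); apply: (@ltn_sum_pt _ _ n); last by rewrite E1 E2.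
move=> m; case: (ltnP c (a m)) => // hm.
have : (a n < a m)%N by move: E1; rewrite ltnNge => /negbFE; lia.
move/(comonP hs) => hb; move: E2; lia.
Qed.

Lemma inv_cen0 (a b : C) n : (\sum_(m : 'I_N) a m == 0)%N -> InvQ (a, dep n b).
Proof.
move=> /eqP h0 c /=.
suff -> : Sc a c = 0%N by [].
apply/eqP; rewrite -leqn0 -h0 /Sc; apply: leq_sum => m _; exact: leq_subr.
Qed.

Lemma inv_cenL (a b : C) m n : InvQ (a, b) -> m \in longest a -> InvQ (dep m a, dep n b).
Proof.
move=> hI hm c /=; rewrite !Sc_dep; have := hI c => /= h.
have hge := Sc_ge b n c.
case E1: (c < a m)%N; first by case: (c < b n)%N => /=; lia.
suff -> : Sc a c = 0%N by [].
rewrite /Sc big1 // => i _; apply/eqP; rewrite subn_eq0.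
move: hm; rewrite inE => /eqP hm.
have : (a i <= maxQ a)%N by rewrite /maxQ; exact: (@leq_bigmax _ (fun j => a j) i).
rewrite -hm; move: E1; rewrite ltnNge => /negbFE; lia.
Qed.
End Comb.

End SComb.
Import SComb.

Module SEng.
Set Implicit Arguments. Unset Strict Implicit. Unset Printing Implicit Defensive.
Import Order.TTheory GRing.Theory Num.Theory.
Local Open Scope ring_scope.
Local Open Scope classical_set_scope.

Section Engine.
Variables (R : realType) (S : eqType) (evs : S -> seq (R * S)).
Local Notation T := (S * R * R)%type.
Local Notation mu := (@lebesgue_measure R).

Fixpoint pick (x : S) (es : seq (R * S)) (lo len u : R) : T :=
  match es with
  | [::] => (x, lo, 0)
  | e :: es' => if es' is [::] then (e.2, lo, len * e.1)
               else if u < lo + len * e.1 then (e.2, lo, len * e.1)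
               else pick x es' (lo + len * e.1) len u
  end.

Fixpoint kids (es : seq (R * S)) (lo len : R) : seq T :=
  match es with
  | [::] => [::]
  | e :: es' => (e.2, lo, len * e.1) :: kids es' (lo + len * e.1) len
  end.

Definition step (t : T) (u : R) : T := pick t.1.1 (evs t.1.1) t.1.2 t.2 u.

Fixpoint runE (t0 : T) (n : nat) (u : R) : T :=
  if n is n'.+1 then step (runE t0 n' u) u else t0.

Fixpoint tree (t0 : T) (n : nat) : seq T :=
  if n is n'.+1 then flatten [seq kids (evs c.1.1) c.1.2 c.2 | c <- tree t0 n']
  else [:: t0].

Definition Itv (lo len : R) : set R := [set` Interval (BLeft lo) (BLeft (lo + len))].

Lemma Itv_meas lo len : measurable (Itv lo len).
Proof. exact: measurable_itv. Qed.

Lemma lt_meas (a : R) : measurable [set u : R | u < a].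
Proof.
have -> : [set u : R | u < a] = [set` Interval -oo%O (BLeft a)].
  by apply/seteqP; split => u /=; rewrite in_itv /=.
exact: measurable_itv.
Qed.

Lemma meas_pick (H : T -> set R) : (forall t, measurable (H t)) ->
  forall x es lo len, measurable [set u | H (pick x es lo len u) u].
Proof.
move=> mH x; elim=> [|e es IH] lo len /=; first exact: mH.
case: es IH => [|e' es] IH; first exact: mH.
have -> : [set u | H (if u < lo + len * e.1 then (e.2, lo, len * e.1)
    else pick x (e' :: es) (lo + len * e.1) len u) u] =
  ([set u | u < lo + len * e.1] `&` H (e.2, lo, len * e.1)) `|`
  (~` [set u | u < lo + len * e.1] `&`
     [set u | H (pick x (e' :: es) (lo + len * e.1) len u) u]).
  move: (pick x (e' :: es)) => f.
  apply/seteqP; split => u /=; case: ifPn => hu.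
  - by move=> ?; left.
  - by move=> ?; right; split => //; apply/negP.
  - by case=> -[] //; rewrite hu.
  - by case=> -[] //; rewrite (negbTE hu).
apply: measurableU; apply: measurableI.
- exact: lt_meas.
- exact: mH.
- exact: measurableC (lt_meas _).
- exact: IH.
Qed.

Definition sumw (es : seq (R * S)) := \sum_(e <- es) e.1.

Fixpoint nonneg (es : seq (R * S)) : Prop :=
  if es is e :: es' then 0 <= e.1 /\ nonneg es' else True.

Lemma Itv0 lo : Itv lo 0 = set0.
Proof.
apply/seteqP; split => u //=; rewrite /Itv /= in_itv /= addr0 => /andP[h1 h2].
by move: (le_lt_trans h1 h2); rewrite ltxx.
Qed.

Lemma split_pick (H : T -> set R) : (forall t, measurable (H t)) ->
  forall x es lo len, 0 <= len -> nonneg es ->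
  mu (Itv lo (len * sumw es) `&` [set u | H (pick x es lo len u) u]) =
  (\sum_(c <- kids es lo len) mu (Itv c.1.2 c.2 `&` H c))%E.
Proof.
move=> mH x; elim=> [|e es IH] lo len len0 /=.
  by rewrite /sumw !big_nil mulr0 Itv0 set0I measure0.
case=> e0 nes.
case: es IH nes => [|e' es] IH nes.
  by rewrite /sumw big_seq1 big_seq1.
rewrite big_cons -IH //.
have lw : 0 <= len * sumw (e' :: es).
  apply: mulr_ge0 => //; rewrite /sumw; elim: (e' :: es) nes => [|f fs IHf] /=.
    by rewrite big_nil.
  by case=> f0 fs0; rewrite big_cons addr_ge0 // IHf.
have -> : Itv lo (len * sumw [:: e, e' & es]) `&`
   [set u | H (if u < lo + len * e.1 then (e.2, lo, len * e.1)
    else pick x (e' :: es) (lo + len * e.1) len u) u] =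
  (Itv lo (len * e.1) `&` H (e.2, lo, len * e.1)) `|`
  (Itv (lo + len * e.1) (len * sumw (e' :: es)) `&`
     [set u | H (pick x (e' :: es) (lo + len * e.1) len u) u]).
  move: (pick x (e' :: es)) lw => f lw.
  have -> : sumw [:: e, e' & es] = e.1 + sumw (e' :: es) by rewrite /sumw big_cons.
  have le0 : 0 <= len * e.1 by apply: mulr_ge0.
  apply/seteqP; split => u; rewrite /Itv /= !in_itv /=.
  - case: ifPn => hu [/andP[h1 h2] h3].
      by left; rewrite h1.
    right; rewrite -leNgt in hu; rewrite hu /=; split => //.
    by rewrite -addrA -mulrDr.
  - case=> -[/andP[h1 h2] h3].
      rewrite h2; split => //; rewrite h1 /=.
      by rewrite mulrDr addrA (lt_le_trans h2) // lerDl.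
    rewrite [u < lo + len * e.1]ltNge h1 /=; split => //.
    by rewrite (le_trans _ h1) ?lerDl //= mulrDr addrA.
rewrite measureU //.
- by apply: measurableI; [exact: Itv_meas|exact: mH].
- apply: measurableI; first exact: Itv_meas.
  by apply: meas_pick.
- apply/seteqP; split => u //= [[+ _] [+ _]]; rewrite /Itv /= !in_itv /=.
  move=> /andP[_ h1] /andP[h2 _].
  by move: (lt_le_trans h1 h2); rewrite ltxx.
Qed.

Lemma eq_big_all (A : Type) (P : pred A) (F G : A -> \bar R) (l : seq A) :
  all P l -> (forall a, P a -> F a = G a) ->
  (\sum_(a <- l) F a = \sum_(a <- l) G a)%E.
Proof.
move=> hl hFG; elim: l hl => [|a l IH] /=; first by rewrite !big_nil.
by case/andP=> Pa Pl; rewrite !big_cons hFG // IH.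
Qed.

Lemma kids_len es lo len : 0 <= len -> nonneg es ->
  all (fun c : T => 0 <= c.2) (kids es lo len).
Proof.
move=> l0; elim: es lo => [|e es IH] lo //= [e0 ne].
by rewrite mulr_ge0 //= IH.
Qed.

Lemma pick_prop (Q : S -> Prop) x (es : seq (R * S)) lo len u : es != [::] ->
  (forall e, e \in es -> Q e.2) -> Q (pick x es lo len u).1.1.
Proof.
elim: es lo => [|e es IH] lo //= _ h.
case: es IH h => [|e' es] IH h /=; first by apply: h; rewrite mem_head.
case: ifP => _ /=; first by apply: h; rewrite mem_head.
apply: IH => // f hf; apply: h; by rewrite in_cons hf orbT.
Qed.

Lemma kids_sum (F : S -> R -> R) es lo len :
  \sum_(c <- kids es lo len) F c.1.1 c.2 = \sum_(e <- es) F e.2 (len * e.1).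
Proof.
elim: es lo => [|e es IH] lo /=; first by rewrite !big_nil.
by rewrite !big_cons IH.
Qed.

Lemma nonneg_in (es : seq (R * S)) : (forall e, e \in es -> 0 <= e.1) -> nonneg es.
Proof.
elim: es => [|e es IH] //= h; split; first by apply: h; rewrite mem_head.
by apply: IH => f hf; apply: h; rewrite in_cons hf orbT.
Qed.

Hypothesis evs_nonneg : forall x, nonneg (evs x).
Hypothesis evs_sum1 : forall x, sumw (evs x) = 1.

Lemma tree_len t0 n : 0 <= t0.2 -> all (fun c : T => 0 <= c.2) (tree t0 n).
Proof.
move=> h0; elim: n => [|n IH] /=; first by rewrite h0.
elim: (tree t0 n) IH => [|c l IHl] //= /andP[c0 hl].
by rewrite all_cat kids_len //= IHl.
Qed.

Lemma meas_iter t0 n (H : T -> set R) : (forall t, measurable (H t)) ->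
  measurable [set u | H (runE t0 n u) u].
Proof.
elim: n H => [|n IH] H mH /=; first exact: mH.
apply: (IH (fun t u => H (step t u) u)) => t.
exact: meas_pick.
Qed.

Lemma claim t0 n (H : T -> set R) : (forall t, measurable (H t)) -> 0 <= t0.2 ->
  mu (Itv t0.1.2 t0.2 `&` [set u | H (runE t0 n u) u]) =
  (\sum_(c <- tree t0 n) mu (Itv c.1.2 c.2 `&` H c))%E.
Proof.
move=> mH h0; elim: n H mH => [|n IH] H mH /=; first by rewrite big_seq1.
rewrite (IH (fun t u => H (step t u) u)); last by move=> t; exact: meas_pick.
rewrite big_flatten /= big_map.
apply: (eq_big_all (tree_len n h0)) => c c0.
have -> : Itv c.1.2 c.2 = Itv c.1.2 (c.2 * sumw (evs c.1.1)) by rewrite evs_sum1 mulr1.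
exact: split_pick.
Qed.
End Engine.

End SEng.
Import SEng.

Module SP.
Set Implicit Arguments. Unset Strict Implicit. Unset Printing Implicit Defensive.
Import Order.TTheory GRing.Theory Num.Theory.
Local Open Scope ring_scope.
Local Open Scope classical_set_scope.

Section Pr.
Variable R : realType.
Local Notation mu := (@lebesgue_measure R).
Definition Pu := uniform_prob (@ltr01 R).

Lemma PuE (A : set R) : measurable A ->
  Pu A = mu ([set` Interval (BLeft 0) (BLeft 1)] `&` A).
Proof.
move=> mA.
rewrite /Pu /uniform_prob integral_uniform_pdf.
have mI : measurable (A `&` `[0, 1]) by apply: measurableI => //; exact: measurable_itv.
rewrite (eq_integral (fun=> 1%:E)); last first.
  move=> x; rewrite inE /= => -[_]; rewrite /uniform_pdf /= in_itv /= => ->.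
  by rewrite subr0 invr1.
rewrite integral_cst // mul1e.
have -> : A `&` `[0, 1] = (A `&` [set` Interval (BLeft 0) (BLeft 1)]) `|` (A `&` [set 1]).
  apply/seteqP; split => x /=; rewrite !in_itv /=.
  - move=> [Ax /andP[x0 x1]]; rewrite le_eqVlt in x1; case/orP: x1 => [/eqP x1|x1].
      by right.
    by left; rewrite x0 x1.
  - case=> [[Ax /andP[x0 x1]]|[Ax x1]]; split => //; first by rewrite x0 ltW.
    rewrite x1; apply/andP; split; [exact: ler01|exact: lexx].
rewrite (@measureU0 _ _ _ mu); first by rewrite setIC.
- by apply: measurableI => //; exact: measurable_itv.
- by apply: measurableI.
- apply: (@subset_measure0 _ _ _ mu _ [set (1:R)]).
  + by apply: measurableI.
  + exact: measurable_set1.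
  + by move=> x [].
  + exact: lebesgue_measure_set1.
Qed.
End Pr.

End SP.
Import SP.

Module SModel.
Set Implicit Arguments. Unset Strict Implicit. Unset Printing Implicit Defensive.
Import Order.TTheory GRing.Theory Num.Theory.
Local Open Scope ring_scope.

Section Model.
Variables (R : realType) (N : nat) (lam p : R).
Hypothesis lam0 : 0 <= lam.
Hypothesis N1 : (1 <= N)%N.
Hypothesis p0 : 0 < p.
Hypothesis p1 : p <= 1.
Local Notation C := (config N).
Local Notation PS := (C * C)%type.

Definition Zn : R := N%:R * (1 + lam).

Lemma Zn_gt0 : 0 < Zn.
Proof.
rewrite /Zn mulr_gt0 //; first by rewrite ltr0n.
by apply: (lt_le_trans ltr01); rewrite lerDl.
Qed.

Definition Lst (a : C) := [seq m <- index_enum 'I_N | m \in longest a].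

Definition cen (a b : C) (n : 'I_N) : seq (R * PS) :=
  if (\sum_(m : 'I_N) a m == 0)%N then [:: (p / Zn, (a, dep n b))]
  else [seq (p / Zn / #|longest a|%:R, (dep m a, dep n b)) | m <- Lst a].

Definition evs (x : PS) : seq (R * PS) :=
  [seq (lam / Zn, (arr n x.1, arr (sig x.1 x.2 n) x.2)) | n <- index_enum 'I_N] ++
  [seq ((1 - p) / Zn, (dep n x.1, dep (sig x.1 x.2 n) x.2)) | n <- index_enum 'I_N] ++
  flatten [seq cen x.1 x.2 n | n <- index_enum 'I_N].

Lemma sum_evs (F : R * PS -> R) x :
  \sum_(e <- evs x) F e =
  \sum_(n < N) F (lam / Zn, (arr n x.1, arr (sig x.1 x.2 n) x.2)) +
  \sum_(n < N) F ((1 - p) / Zn, (dep n x.1, dep (sig x.1 x.2 n) x.2)) +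
  \sum_(n < N) \sum_(e <- cen x.1 x.2 n) F e.
Proof. by rewrite !big_cat /= !big_map big_flatten /= big_map addrA. Qed.

Lemma sum_cen (F : R * PS -> R) a b n :
  \sum_(e <- cen a b n) F e =
  if (\sum_(m : 'I_N) a m == 0)%N then F (p / Zn, (a, dep n b))
  else \sum_(m in longest a) F (p / Zn / #|longest a|%:R, (dep m a, dep n b)).
Proof.
rewrite /cen; case: ifP => _; first by rewrite big_seq1.
by rewrite big_map /Lst big_filter.
Qed.

Lemma longest_gt0 (a : C) : (0 < #|longest a|)%N.
Proof.
have : (0 < #|'I_N|)%N by rewrite card_ord.
case/(@bigop.eq_bigmax 'I_N (fun i : 'I_N => a i)) => i0 hi0.
apply/card_gt0P; exists i0; rewrite inE; apply/eqP.
by rewrite /maxQ hi0.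
Qed.

Lemma sum_const_L (a : C) (c : R) :
  \sum_(m in longest a) c / #|longest a|%:R = c.
Proof.
rewrite sumr_const -[(c / _) *+ _]mulr_natr mulfVK //.
by rewrite pnatr_eq0 -lt0n longest_gt0.
Qed.

Lemma evs_sum1 x : sumw (evs x) = 1.
Proof.
rewrite /sumw sum_evs /=.
under [X in _ + _ + X]eq_bigr => n _ do rewrite sum_cen /= (fun_if (fun x => x)) sum_const_L if_same.
rewrite !sumr_const card_ord -!(mulr_natl (_ / Zn)) -!mulrDr -!mulrDl.
have -> : lam + (1 - p) + p = 1 + lam by ring.
by rewrite mulrA mulfV // gt_eqF // Zn_gt0.
Qed.

Lemma cen_marg1 (a b a' : C) n :
  \sum_(e <- cen a b n) e.1 * (e.2.1 == a')%:R = p / Zn * central R a a'.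
Proof.
rewrite sum_cen /central /=; case: ifP => _; first by rewrite eq_sym.
rewrite mulr_sumr; apply: eq_bigr => m _; rewrite eq_sym /=; ring.
Qed.

Lemma marg1 x a' : \sum_(e <- evs x) e.1 * (e.2.1 == a')%:R = trans lam p x.1 a'.
Proof.
rewrite sum_evs /=.
under [X in _ + _ + X]eq_bigr => n _ do rewrite cen_marg1.
rewrite /trans -/Zn; congr (_ + _ + _).
- by apply: eq_bigr => n _; rewrite eq_sym.
- by apply: eq_bigr => n _; rewrite eq_sym.
- rewrite sumr_const card_ord -(mulr_natl (_ * _)) /Zn; ring.
Qed.

Lemma cen_marg2 (a b b' : C) n :
  \sum_(e <- cen a b n) e.1 * (e.2.2 == b')%:R = p / Zn * (dep n b == b')%:R.
Proof.
rewrite sum_cen /=; case: ifP => _ //.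
under eq_bigr => m _ do rewrite mulrAC.
by rewrite sum_const_L.
Qed.

Lemma marg2 x b' : \sum_(e <- evs x) e.1 * (e.2.2 == b')%:R = trans lam 0 x.2 b'.
Proof.
rewrite sum_evs /=.
under [X in _ + _ + X]eq_bigr => n _ do rewrite cen_marg2.
set s := sig x.1 x.2.
have rs (f : 'I_N -> R) : \sum_(n < N) f (s n) = \sum_(n < N) f n.
  by rewrite [RHS](reindex_inj (@perm_inj _ s)).
rewrite (rs (fun n => lam / Zn * (arr n x.2 == b')%:R)).
rewrite (rs (fun n => (1 - p) / Zn * (dep n x.2 == b')%:R)).
rewrite /trans -/Zn mulr0 !mul0r addr0 -addrA -big_split /=; congr (_ + _).
- by apply: eq_bigr => n _; rewrite eq_sym.
- apply: eq_bigr => n _; rewrite eq_sym; ring.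
Qed.


Lemma mem_evs (P : R * PS -> Prop) x :
  (forall n, P (lam / Zn, (arr n x.1, arr (sig x.1 x.2 n) x.2))) ->
  (forall n, P ((1 - p) / Zn, (dep n x.1, dep (sig x.1 x.2 n) x.2))) ->
  ((\sum_(m : 'I_N) x.1 m == 0)%N -> forall n, P (p / Zn, (x.1, dep n x.2))) ->
  (forall m n, m \in longest x.1 ->
     P (p / Zn / #|longest x.1|%:R, (dep m x.1, dep n x.2))) ->
  forall e, e \in evs x -> P e.
Proof.
move=> h1 h2 h3 h4 e; rewrite !mem_cat => /or3P[/mapP[n _ ->]|/mapP[n _ ->]|].
- exact: h1.
- exact: h2.
case/flattenP => s /mapP[n _ ->]; rewrite /cen; case: ifP => hs.
  by rewrite inE => /eqP ->; exact: h3.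
by case/mapP => m; rewrite /Lst mem_filter => /andP[hm _] ->; exact: h4.
Qed.

Lemma evs_nonneg x : nonneg (evs x).
Proof.
have hZ : 0 <= Zn^-1 by rewrite invr_ge0 ltW // Zn_gt0.
apply: nonneg_in; apply: mem_evs => /= [n|n|_ n|m n _].
- by rewrite mulr_ge0.
- by rewrite mulr_ge0 // subr_ge0.
- by rewrite mulr_ge0 // ltW.
- by rewrite !mulr_ge0 // ?invr_ge0 ?ler0n // ltW.
Qed.

Lemma evs_inv x : InvQ x -> forall e, e \in evs x -> InvQ e.2.
Proof.
case: x => a b hI; apply: mem_evs => /= [n|n|h n|m n hm].
- exact: inv_arr (sigP a b) hI.
- exact: inv_dep (sigP a b) hI.
- exact: inv_cen0.
- exact: inv_cenL.
Qed.

Lemma evs_nil x : evs x != [::].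
Proof.
apply/eqP => h.
have : (lam / Zn, (arr (Ordinal N1) x.1, arr (sig x.1 x.2 (Ordinal N1)) x.2)) \in evs x.
  by rewrite mem_cat (map_f (fun n => (lam / Zn, (arr n x.1, arr (sig x.1 x.2 n) x.2)))) // mem_index_enum.
by rewrite h in_nil.
Qed.

End Model.

End SModel.
Import SModel.

Module SMain.
Set Implicit Arguments. Unset Strict Implicit. Unset Printing Implicit Defensive.
Import Order.TTheory GRing.Theory Num.Theory.
Local Open Scope ring_scope.
Local Open Scope classical_set_scope.

Section Main.
Variables (R : realType) (N : nat) (lam p : R) (Q0p Q00 : config N).
Hypothesis lam0 : 0 <= lam.
Hypothesis N1 : (1 <= N)%N.
Hypothesis p0 : 0 < p.
Hypothesis p1 : p <= 1.
Hypothesis hInv0 : InvQ (Q0p, Q00).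
Local Notation C := (config N).
Local Notation PS := (C * C)%type.
Local Notation E := (@evs R N lam p).

Lemma Esum1 x : sumw (E x) = 1. Proof. by apply: evs_sum1. Qed.
Lemma Enonneg x : nonneg (E x). Proof. by apply: evs_nonneg. Qed.
Lemma Enil x : E x != [::]. Proof. by apply: evs_nil. Qed.

Definition s0 : PS := (Q0p, Q00).
Definition evsH (h : seq PS) : seq (R * seq PS) :=
  [seq (e.1, rcons h e.2) | e <- E (last s0 h)].

Lemma H_sum1 h : sumw (evsH h) = 1.
Proof. by rewrite /sumw big_map -(Esum1 (last s0 h)). Qed.

Lemma H_nonneg h : nonneg (evsH h).
Proof.
apply: nonneg_in => e /mapP[f hf ->] /=.
elim: (E (last s0 h)) (Enonneg (last s0 h)) hf => [|g gs IH] //= [g0 hg].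
by rewrite in_cons => /orP[/eqP ->|/IH]; [|apply].
Qed.

Definition t0 : seq PS * R * R := ([:: s0], 0, 1).
Definition Hn (u : R) (n : nat) : seq PS := (runE evsH t0 n u).1.1.

Lemma Hn_step u n : exists y, Hn u n.+1 = rcons (Hn u n) y /\
  (InvQ (last s0 (Hn u n)) -> InvQ y).
Proof.
rewrite /Hn /= /step.
apply: (pick_prop (Q := fun h' => exists y, h' = rcons (runE evsH t0 n u).1.1 y /\
  (InvQ (last s0 (runE evsH t0 n u).1.1) -> InvQ y))).
  by rewrite /evsH; case: (E _) (Enil (last s0 (runE evsH t0 n u).1.1)).
move=> e /mapP[f hf ->] /=; exists f.2; split => // hI.
exact: (evs_inv hI hf).
Qed.

Lemma Hn_inv u n : InvQ (last s0 (Hn u n)).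
Proof.
elim: n => [|n IH]; first exact: hInv0.
by case: (Hn_step u n) => y [-> hy]; rewrite last_rcons; apply: hy.
Qed.

Lemma Hn_seq u n : Hn u n = [seq last s0 (Hn u j) | j <- iota 0 n.+1].
Proof.
elim: n => [|n IH]; first by [].
case: (Hn_step u n) => y [e _].
have -> : iota 0 n.+2 = rcons (iota 0 n.+1) n.+1.
  by rewrite -cats1 -addn1 iotaD.
rewrite map_rcons -IH [in LHS]e; congr rcons.
by rewrite e last_rcons.
Qed.


Lemma path_prob_rcons (q : R) (x : C) t a :
  path_prob lam q x (rcons t a) = path_prob lam q x t * trans lam q (last x t) a.
Proof.
elim: t x => [|y t IH] x /=; first by rewrite mulr1 mul1r.
by rewrite IH mulrA.
Qed.

Lemma chain_prob_rcons (q : R) (Q0 : C) s a : s != [::] ->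
  chain_prob lam q Q0 (rcons s a) = chain_prob lam q Q0 s * trans lam q (last Q0 s) a.
Proof. by case: s => [|x t] // _ /=; rewrite path_prob_rcons mulrA. Qed.

Lemma tree_marg (pi : PS -> C) (q : R) :
  (forall x a', \sum_(e <- E x) e.1 * (pi e.2 == a')%:R = trans lam q (pi x) a') ->
  forall k s, size s = k.+1 ->
  \sum_(c <- tree evsH t0 k) c.2 * (map pi c.1.1 == s)%:R = chain_prob lam q (pi s0) s.
Proof.
move=> hm; elim=> [|k IH] s.
  case: s => [|a [|]] //= _.
  by rewrite big_seq1 /= mul1r mulr1 eqseq_cons andbT eq_sym.
case/lastP: s => [|s a] //; rewrite size_rcons => -[hs].
rewrite chain_prob_rcons; last by rewrite -size_eq0 hs.
rewrite -IH // mulr_suml /= big_flatten /= big_map.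
apply: eq_bigr => c _.
rewrite (kids_sum (fun h w => w * (map pi h == rcons s a)%:R)) /evsH big_map /=.
under eq_bigr => f _ do rewrite map_rcons eqseq_rcons -mulnb natrM.
case: (eqVneq (map pi c.1.1) s) => [<-|hne].
  rewrite last_map -hm mulr_sumr; apply: eq_bigr => f _ /=; ring.
rewrite big1 ?mulr0 ?mul0r // => f _ /=; ring.
Qed.

Lemma esum_point (f : C -> R) (v : seq R) (s1 : seq C) (w : R) : 0 <= w ->
  (\esum_(s in [set s | map f s = v]) (w * (s1 == s)%:R)%:E =
   (w * (map f s1 == v)%:R)%:E)%E.
Proof.
move=> w0; rewrite (esumID [set s1]); last first.
  by move=> s _; rewrite lee_fin mulr_ge0.
rewrite [X in (_ + X)%E]esum1 ?adde0; last first.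
  move=> s [_ /= hs]; have -> : (s1 == s) = false.
    by apply/negbTE; apply/eqP => e; apply: hs; rewrite e.
  by rewrite mulr0.
case: (eqVneq (map f s1) v) => h.
  have -> : [set s | map f s = v] `&` [set s1] = [set s1].
    by apply/seteqP; split => s /=; [case|move=> ->; split].
  by rewrite esum_set1 ?eqxx ?h // lee_fin mulr_ge0.
have -> : [set s | map f s = v] `&` [set s1] = set0.
  by apply/seteqP; split => s //= [hs e]; move: h; rewrite -e hs eqxx.
by rewrite esum_set0 mulr0.
Qed.

Lemma fdd_eq (pi : PS -> C) (q : R) (Q0 : C) : pi s0 = Q0 ->
  (forall x a', \sum_(e <- E x) e.1 * (pi e.2 == a')%:R = trans lam q (pi x) a') ->
  forall v k, size v = k.+1 ->
  V1_fdd lam q Q0 v =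
  (\sum_(c <- tree evsH t0 k) (c.2 * (map (V R 1 \o pi) c.1.1 == v)%:R)%:E)%E.
Proof.
move=> hQ hm v k hk; rewrite /V1_fdd.
rewrite (eq_esum (b := fun s =>
  (\sum_(c <- tree evsH t0 k | c \in tree evsH t0 k) (c.2 * (map pi c.1.1 == s)%:R)%:E)%E));
  last first.
  move=> s /= hs; rewrite sumEFin -big_seq (tree_marg hm) ?hQ //.
  by rewrite -hk -hs size_map.
rewrite esum_sum; last first.
  move=> s c _ hc; rewrite lee_fin mulr_ge0 //.
  by have := allP (@tree_len _ _ evsH H_nonneg t0 k ler01) c hc.
rewrite [in RHS]big_seq; apply: eq_bigr => c hc.
rewrite esum_point; last by have := allP (@tree_len _ _ evsH H_nonneg t0 k ler01) c hc.
by rewrite map_comp.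
Qed.


Lemma meas_const (P : Prop) : measurable [set _ : R | P].
Proof.
case: (pselect P) => h.
  have -> : [set _ : R | P] = setT by apply/seteqP; split.
  exact: measurableT.
have -> : [set _ : R | P] = set0 by apply/seteqP; split => // x.
exact: measurable0.
Qed.

Lemma Pu_fdd (g : seq PS -> bool) k :
  (@Pu R) [set u | g (Hn u k)] = (\sum_(c <- tree evsH t0 k) (c.2 * (g c.1.1)%:R)%:E)%E.
Proof.
rewrite PuE; last exact: (@meas_iter _ _ evsH t0 k (fun c => [set _ | g c.1.1]) (fun c => meas_const _)).
have := @claim R _ evsH H_nonneg H_sum1 t0 k (fun c => [set _ | g c.1.1]) (fun c => meas_const _) ler01.
rewrite /Itv /= add0r => ->.
apply: (eq_big_all (@tree_len _ _ evsH H_nonneg t0 k ler01)) => c /= c0.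
have -> : [set _ : R | g c.1.1] = if g c.1.1 then setT else set0.
  by case: (g _); apply/seteqP; split.
case: (g c.1.1); last by rewrite setI0 measure0 mulr0.
rewrite setIT mulr1 lebesgue_measure_itv /=; case: ifPn => h.
  by rewrite -EFinB addrAC subrr add0r.
congr EFin; apply/eqP; rewrite eq_le c0 /=.
by move: h; rewrite lte_fin ltrDl -leNgt.
Qed.

Lemma X_meas (f : seq PS -> R) n : measurable_fun setT (fun u => f (Hn u n)).
Proof.
move=> _ B mB; rewrite setTI.
exact: (@meas_iter _ _ evsH t0 n (fun c => [set _ | B (f c.1.1)]) (fun c => meas_const _)).
Qed.

Lemma V_Sc (Q : C) c : V R c.+1 Q = (Sc Q c)%:R / N%:R.
Proof.
rewrite /V /Sc natr_sum mulr_suml; apply: eq_bigr => m _.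
by rewrite sumr_const_nat subSS mulr_natl.
Qed.

Lemma V1_le (x : PS) : InvQ x -> V R 1 x.1 <= V R 1 x.2.
Proof.
move=> h; rewrite !V_Sc ler_wpM2r ?invr_ge0 ?ler0n // ler_nat; exact: h.
Qed.

Lemma Hn_seqf (f : PS -> R) u k :
  [seq f (last s0 (Hn u j)) | j <- iota 0 k.+1] = map f (Hn u k).
Proof. by rewrite [in RHS]Hn_seq -map_comp. Qed.

Theorem main_dom : stoch_dominated (V1_fdd lam p Q0p) (V1_fdd lam 0 Q00).
Proof.
exists _, _, (@Pu R), (fun u n => V R 1 (last s0 (Hn u n)).1),
  (fun u n => V R 1 (last s0 (Hn u n)).2).
split; [|split].
- split; first by move=> n; exact: (X_meas (fun h => V R 1 (last s0 h).1) n).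
  move=> v hv; have hk : size v = (size v).-1.+1 by rewrite prednK // lt0n size_eq0.
  have -> : [set w | [seq V R 1 (last s0 (Hn w k)).1 | k <- iota 0 (size v)] = v] =
      [set u | (map (V R 1 \o fst) (Hn u (size v).-1) == v)].
    apply/seteqP; split => u /=; rewrite [in iota _ _]hk (Hn_seqf (fun x => V R 1 x.1)).
      by move=> ->.
    by move/eqP.
  have Hp := Pu_fdd (fun h => map (V R 1 \o fst) h == v) (size v).-1.
  cbv beta in Hp; apply: (eq_trans Hp); rewrite (@fdd_eq fst p Q0p _ _ v (size v).-1) //; last exact: marg1.
- split; first by move=> n; exact: (X_meas (fun h => V R 1 (last s0 h).2) n).
  move=> v hv; have hk : size v = (size v).-1.+1 by rewrite prednK // lt0n size_eq0.
  have -> : [set w | [seq V R 1 (last s0 (Hn w k)).2 | k <- iota 0 (size v)] = v] =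
      [set u | (map (V R 1 \o snd) (Hn u (size v).-1) == v)].
    apply/seteqP; split => u /=; rewrite [in iota _ _]hk (Hn_seqf (fun x => V R 1 x.2)).
      by move=> ->.
    by move/eqP.
  have Hp := Pu_fdd (fun h => map (V R 1 \o snd) h == v) (size v).-1.
  cbv beta in Hp; apply: (eq_trans Hp); rewrite (@fdd_eq snd 0 Q00 _ _ v (size v).-1) //.
  by move=> x b'; apply: marg2.
- have -> : [set w | forall n, V R 1 (last s0 (Hn w n)).1 <= V R 1 (last s0 (Hn w n)).2] = setT.
    by apply/seteqP; split => // u _ n; apply: V1_le; exact: Hn_inv.
  exact: probability_setT.
Qed.

End Main.

Lemma inv0 (R : realType) (N : nat) (Q0p Q00 : config N) : (1 <= N)%N ->
  (forall i : nat, (1 <= i)%N -> V R i Q0p = V R i Q00) -> InvQ (Q0p, Q00).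
Proof.
move=> hN hV c /=; have := hV c.+1 isT; rewrite !V_Sc.
move/(mulIf _) => h.
have : (Sc Q0p c)%:R = (Sc Q00 c)%:R :> R.
  by apply: h; rewrite invr_eq0 pnatr_eq0 -lt0n.
by move/eqP; rewrite eqr_nat => /eqP ->.
Qed.


End SMain.
Import SMain.

Import Order.TTheory GRing.Theory Num.Theory.
Local Open Scope ring_scope.

Theorem lemma8 (R : realType) (lam p : R) (N : nat) (Q0p Q00 : config N) :
  0 <= lam -> lam < 1 -> (1 <= N)%N -> 0 < p -> p <= 1 ->
  (forall i : nat, (1 <= i)%N -> V R i Q0p = V R i Q00) ->
  stoch_dominated (V1_fdd lam p Q0p) (V1_fdd lam 0 Q00).
Proof.
move=> hl0 _ hN hp0 hp1 hV.
exact: (main_dom hl0 hN hp0 hp1 (inv0 hN hV)).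
Qed.
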